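(* For every $k\ge1$ and every $T\in\mathcal{GT}_k(n)$, the word $\omega(T)\in\mathrm{ACol}(C_n)^*$ is of highest weight, i.e. no Kashiwara operator $e_i$ ($1\le i\le n$) is defined on $\omega(T)$.
   Context: Type $C$ setting: $C_n=\{1<\cdots<n<\overline n<\cdots<\overline1\}$ with crystal graph $1\xrightarrow{1}2\xrightarrow{2}\cdots\xrightarrow{n-1}n\xrightarrow{n}\overline n\xrightarrow{n-1}\cdots\xrightarrow{1}\overline1$, and Kashiwara operators $e_i,f_i$ acting on $C_n^*$ by the tensor product rule. A column is a strictly increasing word; $N_z(u)$ counts letters $x\le z$ or $x\ge\overline z$; a column is admissible if nonempty with $N_z(u)\le z$ for all $z$. $\mathrm{ACol}(C_n)$ is the set of admissible columns plus a symbol $\epsilon$; $p:\mathrm{ACol}(C_n)^*\to C_n^*$ erases $\epsilon$ and sends a column to itself. $e_iw$ is defined for $w\in\mathrm{ACol}(C_n)^*$ iff $e_ip(w)$ is defined (and then it modifies the corresponding column). Blocks: $\mathfrak{c}(m)=12\cdots m$; $\mathfrak{c}(a,b)=(a+1)\cdots(a+b)$; $\mathfrak{c}(\overline a,c)=\overline a\,\overline{a-1}\cdots\overline{a-c+1}$ (empty when $b=0$ resp. $c=0$). $C$-trees: vertices are $i$ ($i\ge1$), $im$ and $im^-$ ($i,m\ge1$); levels: $i$ has level $i$, $im,im^-$ have level $i+m$; strand $i$ is ordered $i<i1<i1^-<i2<i2^-<\cdots$. A labelling of rank $k$ is $s$ from vertices of level $\le k$ to $\mathbb N$, with valuation $q(v)=s(i)+\sum_{im\le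 v}s(im)-\sum_{im^-\le v}s(im^-)$ for $v$ on strand $i$; it is an $n$-labelling if $0\le q(v)\le n$ for all such $v$. $\rho(i)=\mathfrak{c}(s(i))$; $\rho(im)=\mathfrak{c}(q(v'),s(im))$ with $v'$ the predecessor of $im$ on its strand; $\rho(im^-)=\mathfrak{c}(\overline{q(im)},s(im^-))$. Level reading: $\omega_t=\rho(t)\rho((t-1)1)\cdots\rho(1(t-1))\rho(1(t-1)^-)\rho(2(t-2)^-)\cdots\rho((t-1)1^-)$, or the letter $\epsilon$ if empty. $\mathcal{GT}_k(n)$ is the set of $n$-labellings of rank $k$ for which each $\omega_t$ ($1\le t\le k$) is $\epsilon$ or an admissible column; $\omega(T)=\omega_1\cdots\omega_k$. *)

(* Defs.v *)
From mathcomp Require Import all_boot all_order all_algebra.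
Set Implicit Arguments. Unset Strict Implicit. Unset Printing Implicit Defensive.
Import GRing.Theory Num.Theory.

(* [Pos a] is the letter a, [Neg a] is the letter \bar a; valid iff 1 <= a <= n. *)
Inductive cletter := Pos of nat | Neg of nat.

Definition valid_letter (n : nat) (x : cletter) : bool :=
  match x with Pos a | Neg a => (1 <= a <= n)%N end.

Definition crank (n : nat) (x : cletter) : nat :=
  match x with Pos a => a | Neg a => (2 * n + 1 - a)%N end.

(** Crystal structure of C_n (crystal graph
    1 -1-> 2 -2-> ... -> n -n-> \bar n -(n-1)-> ... -1-> \bar 1). *)
(* signature of a letter for e_i/f_i : Some true = '+' (e_i defined on it),
   Some false = '-' (f_i defined on it), None otherwise. *)
Definition csign (n i : nat) (x : cletter) : option bool :=
  if (i < n)%N then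
    match x with
    | Pos a => if a == i.+1 then Some true else if a == i then Some false else None
    | Neg a => if a == i then Some true else if a == i.+1 then Some false else None
    end
  else if i == n then
    match x with
    | Pos a => if a == n then Some false else None
    | Neg a => if a == n then Some true else None
    end
  else None.

(* e_i on a single letter (only meaningful when csign n i x = Some true) *)
Definition e_letter (n i : nat) (x : cletter) : cletter :=
  match x with
  | Pos a => Pos a.-1
  | Neg a => if a == n then Pos n else Neg a.+1
  end.

(* Tensor product rule on words: a '-' followed later by a '+' cancel;
   the reduced signature is +^a -^b and e_i acts on the rightmost
   uncancelled '+'.  [escan] returns the position of that letter, if any. *)
Fixpoint escan (n i : nat) (w : seq cletter) (pos minus : nat) (lastplus : option nat)
  : option nat :=
  match w with
  | [::] => lastplus
  | x :: w' =>
      match csign n i x with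
      | Some false => escan n i w' pos.+1 minus.+1 lastplus
      | Some true =>
          if (0 < minus)%N then escan n i w' pos.+1 minus.-1 lastplus
          else escan n i w' pos.+1 minus (Some pos)
      | None => escan n i w' pos.+1 minus lastplus
      end
  end.

Definition ekash (n i : nat) (w : seq cletter) : option (seq cletter) :=
  match escan n i w 0 0 None with
  | None => None
  | Some j => Some (set_nth (Pos 0) w j (e_letter n i (nth (Pos 0) w j)))
  end.

Definition is_column (n : nat) (u : seq cletter) : bool :=
  all (valid_letter n) u && sorted (fun x y => (crank n x < crank n y)%N) u.

(* N_z(u) = number of letters x <= z or x >= \bar z *)
Definition Nz (z : nat) (u : seq cletter) : nat :=
  count (fun x => match x with Pos a | Neg a => (a <= z)%N end) u.

Definition admissible (n : nat) (u : seq cletter) : Prop :=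
  [/\ is_column n u, (0 < size u)%N & forall z : nat, (Nz z u <= z)%N].

(* ACol(C_n)^* : words of (admissible) columns or epsilon (= None) *)
Definition acol_word := seq (option (seq cletter)).

Definition pACol (w : acol_word) : seq cletter := flatten [seq odflt [::] c | c <- w].

Definition eACol_defined (n i : nat) (w : acol_word) : bool :=
  isSome (ekash n i (pACol w)).

Definition highest_weight (n : nat) (w : acol_word) : Prop :=
  forall i : nat, (1 <= i <= n)%N -> ~~ eACol_defined n i w.

Definition cblock (m : nat) : seq cletter := [seq Pos j | j <- iota 1 m].
Definition cblockP (a b : nat) : seq cletter := [seq Pos j | j <- iota a.+1 b].
Definition cblockN (a c : nat) : seq cletter := [seq Neg (a - j) | j <- iota 0 c].

(* [VR i] = vertex i, [VP i m] = vertex im, [VM i m] = vertex im^- *)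
Inductive vtx := VR of nat | VP of nat & nat | VM of nat & nat.

Definition is_vtx (v : vtx) : bool :=
  match v with VR i => (1 <= i)%N | VP i m | VM i m => (1 <= i)%N && (1 <= m)%N end.

Definition level (v : vtx) : nat :=
  match v with VR i => i | VP i m | VM i m => (i + m)%N end.

(* A labelling: values on vertices of level > k are irrelevant. *)
Definition labelling := vtx -> nat.

Local Open Scope ring_scope.

(* valuation q(v), with strand order i < i1 < i1^- < i2 < i2^- < ... *)
Definition qval (s : labelling) (v : vtx) : int :=
  match v with
  | VR i => (s (VR i))%:Z
  | VP i m => (s (VR i))%:Z + \sum_(1 <= j < m.+1) (s (VP i j))%:Z
                               - \sum_(1 <= j < m) (s (VM i j))%:Z
  | VM i m => (s (VR i))%:Z + \sum_(1 <= j < m.+1) (s (VP i j))%:Z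
                               - \sum_(1 <= j < m.+1) (s (VM i j))%:Z
  end.

Local Close Scope ring_scope.

Definition n_labelling (n k : nat) (s : labelling) : Prop :=
  forall v : vtx, is_vtx v -> (level v <= k)%N ->
    (0 <= qval s v)%R /\ (qval s v <= n%:Z)%R.

Definition vpred (i m : nat) : vtx := if m == 1%N then VR i else VM i m.-1.

Definition rho (s : labelling) (v : vtx) : seq cletter :=
  match v with
  | VR i => cblock (s v)
  | VP i m => cblockP (absz (qval s (vpred i m))) (s v)
  | VM i m => cblockN (absz (qval s (VP i m))) (s v)
  end.

(* the word of level t (before replacing the empty word by epsilon) *)
Definition level_word (s : labelling) (t : nat) : seq cletter :=
  rho s (VR t)
  ++ flatten [seq rho s (VP j (t - j)) | j <- rev (iota 1 t.-1)]
  ++ flatten [seq rho s (VM j (t - j)) | j <- iota 1 t.-1].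

Definition omega_t (s : labelling) (t : nat) : option (seq cletter) :=
  if level_word s t is [::] then None else Some (level_word s t).

Definition omega (k : nat) (s : labelling) : acol_word :=
  [seq omega_t s t | t <- iota 1 k].

Definition in_GT (n k : nat) (s : labelling) : Prop :=
  n_labelling n k s /\
  forall t : nat, (1 <= t <= k)%N ->
    level_word s t = [::] \/ admissible n (level_word s t).

(* Main.v *)
Require Import Defs.
From mathcomp Require Import all_boot all_order all_algebra.
From mathcomp Require Import zify ring.
Set Implicit Arguments. Unset Strict Implicit. Unset Printing Implicit Defensive.
Import GRing.Theory Num.Theory.
Local Open Scope ring_scope.

Definition gg (n i a : nat) : nat := if (i < n)%N then nat_of_bool (a == i) else nat_of_bool (n <= a)%N.
Definition sg (n i : nat) (x : cletter) : int :=
  match csign n i x with Some true => -1 | Some false => 1 | None => 0 end.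

Lemma gg0 n i : (1 <= i <= n)%N -> gg n i 0 = 0%N.
Proof. move=> h; rewrite /gg. have -> : (0 == i) = false by lia. have -> : (n <= 0)%N = false by lia. by case: ifP. Qed.

Lemma sgPos n i a : (1 <= i <= n)%N -> sg n i (Pos a.+1) = (gg n i a.+1)%:Z - (gg n i a)%:Z.
Proof.
move=> /andP[h1 h2]; rewrite /sg /csign /gg.
case: (ltnP i n) => h3.
  case: (boolP (a == i)) => e.
    have -> : a.+1 == i.+1 by lia. have -> : (a.+1 == i) = false by lia. by [].
  have -> : (a.+1 == i.+1) = false by lia. by case: (boolP (a.+1 == i)) => e' //=.
have -> : i == n by lia.
case: (boolP (a.+1 == n)) => e.
  have -> : (n <= a)%N = false by lia. by have -> : (n <= a.+1)%N by lia.
case: (leqP n a) => h4. by have -> : (n <= a.+1)%N by lia.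
by have -> : (n <= a.+1)%N = false by lia.
Qed.

Lemma sgNeg n i a : (1 <= i <= n)%N -> sg n i (Neg a.+1) = (gg n i a)%:Z - (gg n i a.+1)%:Z.
Proof.
move=> /andP[h1 h2]; rewrite /sg /csign /gg.
case: (ltnP i n) => h3.
  case: (boolP (a == i)) => e.
    have -> : a.+1 == i.+1 by lia. have -> : (a.+1 == i) = false by lia. by [].
  have -> : (a.+1 == i.+1) = false by lia. by case: (boolP (a.+1 == i)) => e' //=.
have -> : i == n by lia.
case: (boolP (a.+1 == n)) => e.
  have -> : (n <= a)%N = false by lia. by have -> : (n <= a.+1)%N by lia.
case: (leqP n a) => h4. by have -> : (n <= a.+1)%N by lia.
by have -> : (n <= a.+1)%N = false by lia.
Qed.
Fixpoint good (n i : nat) (b : int) (w : seq cletter) : Prop :=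
  match w with [::] => True | x :: w' => (0 <= b + sg n i x) /\ good n i (b + sg n i x) w' end.

Definition sumsg n i (w : seq cletter) : int := \sum_(x <- w) sg n i x.

Lemma good_escan n i w : forall (pos m : nat), good n i m%:Z w -> escan n i w pos m None = None.
Proof.
elim: w => [|x w IH] pos m //= [h1 h2].
move: h1 h2; rewrite /sg; case: (csign n i x) => [[]|] h1 h2.
- have hm : (0 < m)%N by lia.
  rewrite hm; apply: IH. have -> : (m.-1)%:Z = m%:Z + -1 by lia. exact h2.
- apply: IH. have -> : (m.+1)%:Z = m%:Z + 1 by lia. exact h2.
- apply: IH. by rewrite addr0 in h2.
Qed.

Lemma good_cat n i u v : forall b, good n i b (u ++ v) <-> good n i b u /\ good n i (b + sumsg n i u) v.
Proof.
rewrite /sumsg; elim: u => [|x u IH] b /=.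
  by rewrite big_nil addr0; tauto.
rewrite big_cons IH addrA; tauto.
Qed.

Definition blockP n i (lo hi : nat) (w : seq cletter) : Prop :=
  (forall b : int, (gg n i lo)%:Z <= b -> good n i b w) /\
  sumsg n i w = (gg n i hi)%:Z - (gg n i lo)%:Z.

Lemma posblock n i a c : (1 <= i <= n)%N ->
  blockP n i a (a + c) [seq Pos j | j <- iota a.+1 c].
Proof.
move=> hi; rewrite /blockP /sumsg; elim: c a => [|c IH] a /=.
  by rewrite big_nil addn0 subrr.
rewrite big_cons sgPos //; case: (IH a.+1) => [H1 H2]; split.
  move=> b hb; split; first by lia.
  apply: H1; lia.
rewrite H2 addSnnS; lia.
Qed.

Lemma negblock_gen n i q c : (1 <= i <= n)%N -> forall r, (r + c <= q)%N ->
  blockP n i (q - r) (q - r - c) [seq Neg (q - j) | j <- iota r c].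
Proof.
move=> hi; rewrite /blockP /sumsg; elim: c => [|c IH] r hr /=.
  by rewrite big_nil subn0 subrr.
have e : (q - r = (q - r.+1).+1)%N by lia.
rewrite big_cons e sgNeg //; case: (IH r.+1) => [|H1 H2]; first by lia.
split.
  move=> b hb; split; first by lia.
  apply: H1; lia.
rewrite H2; have -> : (q - r.+1 - c = (q - r.+1).+1 - c.+1)%N by lia. lia.
Qed.

Lemma negblock n i q c : (1 <= i <= n)%N -> (c <= q)%N -> blockP n i q (q - c) (cblockN q c).
Proof. move=> hi hc; have := negblock_gen hi (r:=0) hc; by rewrite !subn0. Qed.

Lemma flat_block n i (J : seq nat) (lo hi : nat -> nat) (w : nat -> seq cletter) :
  (forall j, j \in J -> blockP n i (lo j) (hi j) (w j)) ->
  forall R : int, 0 <= R ->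
  (forall j, 0 <= (gg n i (hi j))%:Z) ->
  good n i (R + \sum_(j <- J) (gg n i (lo j))%:Z) (flatten [seq w j | j <- J]) /\
  sumsg n i (flatten [seq w j | j <- J]) = \sum_(j <- J) (gg n i (hi j))%:Z - \sum_(j <- J) (gg n i (lo j))%:Z.
Proof.
move=> HB; elim: J HB => [|j J IH] HB R hR hg.
  by split; rewrite /sumsg !big_nil ?addr0 // subrr.
rewrite map_cons.
change (flatten (w j :: [seq w j | j <- J])) with (w j ++ flatten [seq w j | j <- J]).
case: (HB j (mem_head _ _)) => H1 H2.
have HB' : forall j', j' \in J -> blockP n i (lo j') (hi j') (w j').
  by move=> j' hj; apply: HB; rewrite inE hj orbT.
have hs : forall J', 0 <= \sum_(j <- J') (gg n i (lo j))%:Z.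
  by move=> J'; apply: sumr_ge0.
have hR' : 0 <= R + (gg n i (hi j))%:Z.
  exact: addr_ge0.
have [G1 G2] := IH HB' (R + (gg n i (hi j))%:Z) hR' hg.
rewrite !big_cons; split.
  apply/good_cat; split.
    apply: H1. by rewrite addrCA lerDl addr_ge0.
  rewrite H2. move: G1. congr good. ring.
rewrite /sumsg big_cat /= -/(sumsg n i (w j)) -/(sumsg n i (flatten _)) H2 G2. ring.
Qed.

Lemma qVP s j m : (1 <= m)%N -> qval s (VP j m) = qval s (vpred j m) + (s (VP j m))%:Z.
Proof.
case: m => [//|[|m]] _ /=.
  by rewrite /vpred /= big_nat1 big_geq // subr0.
rewrite /vpred /= (big_nat_recr m.+2) //=. ring.
Qed.

Lemma qVM s j m : (1 <= m)%N -> qval s (VM j m) = qval s (VP j m) - (s (VM j m))%:Z.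
Proof.
case: m => [//|m] _ /=.
rewrite [\sum_(1 <= l < m.+2) (s (VM j l))%:Z](big_nat_recr m.+1) //=. ring.
Qed.

Lemma qnonneg n k s v : n_labelling n k s -> is_vtx v -> (level v <= k)%N -> 0 <= qval s v.
Proof. by move=> hL hv hl; case: (hL v hv hl). Qed.

Lemma vpred_ok j m : (1 <= j)%N -> (1 <= m)%N -> is_vtx (vpred j m) && (level (vpred j m) == (j + m).-1)%N.
Proof.
move=> hj hm; rewrite /vpred; case: eqP => e /=.
  rewrite e; apply/andP; split => //; apply/eqP; lia.
apply/andP; split; [apply/andP; split => //; lia| apply/eqP; lia].
Qed.

Lemma abszP (x : int) : 0 <= x -> (absz x)%:Z = x.
Proof. by case: x. Qed.

Lemma sumsg_cat n i u v : sumsg n i (u ++ v) = sumsg n i u + sumsg n i v.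
Proof. by rewrite /sumsg big_cat. Qed.

Definition latest (t j : nat) : vtx := vpred j (t.+1 - j).
Definition B n i (s : labelling) (t : nat) : int :=
  \sum_(j <- iota 1 t) (gg n i (absz (qval s (latest t j))))%:Z.

Lemma B_ge0 n i s t : 0 <= B n i s t.
Proof. by apply: sumr_ge0. Qed.

Lemma level_ok n i k s t : (1 <= i <= n)%N -> n_labelling n k s -> (1 <= t <= k)%N ->
  good n i (B n i s t.-1) (level_word s t) /\
  sumsg n i (level_word s t) = B n i s t - B n i s t.-1.
Proof.
move=> hi hL /andP[t1 tk].
pose loP := fun j => absz (qval s (vpred j (t - j))).
pose hiP := fun j => absz (qval s (VP j (t - j))).
pose hiN := fun j => absz (qval s (VM j (t - j))).
have facts : forall j, j \in iota 1 t.-1 -> [/\ hiP j = (loP j + s (VP j (t-j)))%N,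
     (s (VM j (t-j)) <= hiP j)%N & hiN j = (hiP j - s (VM j (t-j)))%N].
  move=> j; rewrite mem_iota => hj.
  have m1 : (1 <= t - j)%N by lia.
  have [hv hl] := andP (@vpred_ok j (t - j) ltac:(lia) m1).
  move/eqP: hl => hl.
  have h1 := qnonneg hL hv ltac:(lia).
  have h2 := @qnonneg n k s (VP j (t - j)) hL ltac:(rewrite /=; lia) ltac:(rewrite /=; lia).
  have h3 := @qnonneg n k s (VM j (t - j)) hL ltac:(rewrite /=; lia) ltac:(rewrite /=; lia).
  have e1 := qVP s j m1. have e2 := qVM s j m1.
  have a1 := abszP h1. have a2 := abszP h2. have a3 := abszP h3.
  rewrite /loP /hiP /hiN; split; lia.
have hB1 : B n i s t.-1 = \sum_(j <- rev (iota 1 t.-1)) (gg n i (loP j))%:Z.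
  by rewrite big_rev /B; apply: eq_bigr => j _; rewrite /latest prednK.
have hB2 : B n i s t = \sum_(j <- iota 1 t.-1) (gg n i (hiN j))%:Z + (gg n i (s (VR t)))%:Z.
  rewrite /B.
  have -> : iota 1 t = iota 1 t.-1 ++ [:: t].
    have e : t = (t.-1 + 1)%N by lia.
    rewrite {1}e iotaD /=; congr (_ ++ _); congr [:: _]; lia.
  rewrite big_cat big_seq1 /=. congr (_ + _).
    apply: eq_big_seq => j; rewrite mem_iota => hj.
    rewrite /latest /vpred /hiN. have -> : (t.+1 - j == 1)%N = false by lia.
    by have -> : (t.+1 - j).-1 = (t - j)%N by lia.
  by rewrite /latest /vpred subSnn.
have hB3 : \sum_(j <- rev (iota 1 t.-1)) (gg n i (hiP j))%:Z = \sum_(j <- iota 1 t.-1) (gg n i (hiP j))%:Z.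
  by rewrite big_rev.
have hb0 := @posblock n i 0 (s (VR t)) hi.
have hP := @flat_block n i (rev (iota 1 t.-1)) loP hiP (fun j => rho s (VP j (t - j))).
have hN := @flat_block n i (iota 1 t.-1) hiP hiN (fun j => rho s (VM j (t - j))).
have [hP1 hP2] := hP ltac:(move=> j; rewrite mem_rev => hj; have [f1 _ _] := facts j hj;
   rewrite f1; exact: posblock) (gg n i (s (VR t)))%:Z ltac:(by []) ltac:(by []).
have [hN1 hN2] := hN ltac:(move=> j hj; have [_ f2 f3] := facts j hj;
   rewrite f3; exact: negblock) (gg n i (s (VR t)))%:Z ltac:(by []) ltac:(by []).
case: hb0 => [hb1 hb2].
rewrite /level_word; split.
  apply/good_cat; split.
    apply: hb1; rewrite gg0 //; exact: B_ge0.
  apply/good_cat; split.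
    move: hP1; congr good. rewrite hb2 gg0 // add0n hB1; ring.
  move: hN1; congr good. rewrite hb2 hP2 gg0 // add0n hB1 hB3; ring.
rewrite !sumsg_cat hb2 hP2 hN2 hB1 hB2 hB3 gg0 // add0n; ring.
Qed.

Lemma all_levels n i k s : (1 <= i <= n)%N -> n_labelling n k s -> forall t, (t <= k)%N ->
  good n i 0 (flatten [seq level_word s u | u <- iota 1 t]) /\
  sumsg n i (flatten [seq level_word s u | u <- iota 1 t]) = B n i s t.
Proof.
move=> hi hL; elim => [|t IH] ht.
  by split => //; rewrite /sumsg /B !big_nil.
have [G1 G2] := IH ltac:(lia).
have [L1 L2] := @level_ok n i k s t.+1 hi hL ltac:(lia).
have e := iotaD 1 t 1; rewrite addn1 add1n in e; rewrite e map_cat flatten_cat /= cats0.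
split.
  apply/good_cat; split => //. rewrite G2 add0r; exact: L1.
rewrite sumsg_cat G2 L2 /=. ring.
Qed.

Theorem corollary5p2 (n k : nat) (s : labelling) :
  (1 <= k)%N -> in_GT n k s -> highest_weight n (omega k s).
Proof.
move=> hk [hL _] i hi.
have [G1 _] := @all_levels n i k s hi hL k (leqnn k).
rewrite /eACol_defined.
have -> : pACol (omega k s) = flatten [seq level_word s u | u <- iota 1 k].
  rewrite /pACol /omega -map_comp; congr flatten; apply: eq_map => t /=.
  by rewrite /omega_t; case: (level_word s t).
by rewrite /ekash (@good_escan n i _ 0 0 G1).
Qed.
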